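(* For every sequent $\Gamma\Rightarrow\Delta$ of compound diagrams: if $\Gamma\Rightarrow\Delta$ is provable in the calculus $\mathbf{C}$, then $\Gamma\Rightarrow\Delta$ is valid.
   Context: Fix a countably infinite set $\mathcal V$ of propositional variables. A Heyting algebra $\mathcal H=(H,\vee,\wedge,\to,0,1)$ is a bounded distributive lattice (order $\le$, join $\vee$, meet $\wedge$, bottom $0$, top $1$) with a binary operation $\to$ such that $c\wedge a\le b\iff c\le a\to b$. Write $-a:=a\to 0$; empty meets are $1$, empty joins are $0$. A valuation is a map $v:\mathcal V\to H$. Zones: for a finite set $L\subset\mathcal V$ (contours), a zone over $L$ is a pair $z=(\mathrm{in}(z),\mathrm{out}(z))$ of disjoint subsets of $L$ with union $L$; $\mathcal Z(L)$ is the set of all zones over $L$. Put $v(z)=\bigwedge_{c\in\mathrm{in}(z)}v(c)\wedge\bigwedge_{c\in\mathrm{out}(z)}-v(c)$ and $m_v(z)=\big(\bigwedge_{c\in\mathrm{in}(z)}v(c)\big)\to\big(\bigvee_{c\in\mathrm{out}(z)}v(c)\big)$. Unitary diagrams are of three syntactically distinct kinds. (i) Venn diagram $d=(L,\mathcal Z(L),S)$, $S=S(d)\subseteq\mathcal Z(L)$ the shaded zones, $[\![d]\!]_v=\bigvee_{z\in S}v(z)$. Special Venn diagrams: $\bot=(\emptyset,\{(\emptyset,\emptyset)\},\emptyset)$, $\top=(\emptyset,\{(\emptyset,\emptyset)\},\{(\emptyset,\emptyset)\})$, the positive literal $P_c=(\{c\},\mathcal Z(\{c\}),\{(\{c\},\emptyset)\})$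 and negative literal $N_c=(\{c\},\mathcal Z(\{c\}),\{(\emptyset,\{c\})\})$ for $c\in\mathcal V$. (ii) Pure Euler diagram $d=(L,Z)$, $Z\subseteq\mathcal Z(L)$ the visible zones, $M(d)=\mathcal Z(L)\setminus Z$ the missing zones, $[\![d]\!]_v=\bigwedge_{z\in M(d)}m_v(z)$. (iii) Euler–Venn diagram $d=(L,Z,S)$ with $Z\subseteq\mathcal Z(L)$, $S\subseteq Z$; $E(d)=(L,Z)$ (pure Euler), $V(d)=(L,\mathcal Z(L),S)$ (Venn), $[\![d]\!]_v=[\![E(d)]\!]_v\to[\![V(d)]\!]_v$. Compound diagrams: $D::=d\mid D\wedge D\mid D\vee D\mid D\to D$ ($d$ unitary), with $[\![D_1\wedge D_2]\!]_v=[\![D_1]\!]_v\wedge[\![D_2]\!]_v$, and similarly $\vee$, $\to$. For $c\in L$, $\mathrm{adj}(z,c)$ is the zone obtained from $z$ by moving $c$ from $\mathrm{out}(z)$ to $\mathrm{in}(z)$ or from $\mathrm{in}(z)$ to $\mathrm{out}(z)$. Reduction: $z\setminus c=(\mathrm{in}(z)\setminus\{c\},\mathrm{out}(z)\setminus\{c\})$, and for a pure Euler $d=(L,Z)$, $d\setminus c=(L\setminus\{c\},\{z\setminus c:z\in Z\})$ (pure Euler). A sequent $\Gamma\Rightarrow\Delta$ consists of finite multisets of compound diagrams; it is valid iff for every Heyting algebra and every valuation $v$, $\bigwedge_{D\in\Gamma}[\![D]\!]_v\le\bigvee_{E\in\Delta}[\![E]\!]_v$. The calculus $\mathbf C$ (premisses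 / conclusion; $\Gamma,\Delta$ arbitrary multisets, $D,E$ compound diagrams): Zero-premiss rules: axiom $P_c,\Gamma\Rightarrow\Delta,P_c$; $(\bot L)$ $\bot,\Gamma\Rightarrow\Delta$; $(\top R)$ $\Gamma\Rightarrow\Delta,\top$. $(\wedge L)$ $D,E,\Gamma\Rightarrow\Delta$ / $D\wedge E,\Gamma\Rightarrow\Delta$. $(\vee L)$ $D,\Gamma\Rightarrow\Delta$ and $E,\Gamma\Rightarrow\Delta$ / $D\vee E,\Gamma\Rightarrow\Delta$. $(\to L)$ $D\to E,\Gamma\Rightarrow D$ and $E,\Gamma\Rightarrow\Delta$ / $D\to E,\Gamma\Rightarrow\Delta$. $(\wedge R)$ $\Gamma\Rightarrow\Delta,D$ and $\Gamma\Rightarrow\Delta,E$ / $\Gamma\Rightarrow\Delta,D\wedge E$. $(\vee R)$ $\Gamma\Rightarrow\Delta,D,E$ / $\Gamma\Rightarrow\Delta,D\vee E$. $(\to R)$ $D,\Gamma\Rightarrow E$ / $\Gamma\Rightarrow\Delta,D\to E$. $(\mathrm{lit}L)$ $N_c,\Gamma\Rightarrow P_c$ / $N_c,\Gamma\Rightarrow\Delta$. $(\mathrm{lit}R)$ $P_c,\Gamma\Rightarrow$ (empty succedent) / $\Gamma\Rightarrow\Delta,N_c$. For a Venn $d=(L,\mathcal Z(L),S)$ with $|S|>1$ and $d_i=(L,\mathcal Z(L),S_i)$, $S_1\cup S_2=S$: $(\mathrm{sep}L)$ $d_1,\Gamma\Rightarrow\Delta$ and $d_2,\Gamma\Rightarrow\Delta$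 / $d,\Gamma\Rightarrow\Delta$; $(\mathrm{sep}R)$ $\Gamma\Rightarrow\Delta,d_1,d_2$ / $\Gamma\Rightarrow\Delta,d$. For a Venn $d$ with $S(d)=\{z\}$, $z=(\{n_1,\dots,n_k\},\{o_1,\dots,o_l\})$: $(\mathrm{dec}L)$ $P_{n_1},\dots,P_{n_k},N_{o_1},\dots,N_{o_l},\Gamma\Rightarrow\Delta$ / $d,\Gamma\Rightarrow\Delta$; $(\mathrm{dec}R)$ $\Gamma\Rightarrow\Delta,P_{n_i}$ ($1\le i\le k$) and $\Gamma\Rightarrow\Delta,N_{o_j}$ ($1\le j\le l$) / $\Gamma\Rightarrow\Delta,d$. For a pure Euler $d=(L,Z)$ such that every $z\in M(d)$ has some $\ell\in L$ with $\mathrm{adj}(z,\ell)\in M(d)$, and $\{c_1,\dots,c_k\}\subseteq L$ the maximal set of contours with $M(d\setminus c_i)\neq\emptyset$: $(\mathrm{red}L)$ $d\setminus c_1,\dots,d\setminus c_k,\Gamma\Rightarrow\Delta$ / $d,\Gamma\Rightarrow\Delta$; $(\mathrm{red}R)$ $\Gamma\Rightarrow\Delta,d\setminus c_i$ ($1\le i\le k$) / $\Gamma\Rightarrow\Delta,d$. For a pure Euler $d=(L,Z)$ with $|M(d)|>1$ and pure Euler $d_1=(L,Z_1)$, $d_2=(L,Z_2)$ with $Z_1\cap Z_2=Z$: $(\mathrm{mzsep}L)$ $d_1,d_2,\Gamma\Rightarrow\Delta$ / $d,\Gamma\Rightarrow\Delta$; $(\mathrm{mzsep}R)$ $\Gamma\Rightarrow\Delta,d_1$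 and $\Gamma\Rightarrow\Delta,d_2$ / $\Gamma\Rightarrow\Delta,d$. For a pure Euler $d$ with $M(d)=\{z\}$, $z=(\{n_1,\dots,n_k\},\{o_1,\dots,o_l\})$: $(\mathrm{impdec}L)$ $d,\Gamma\Rightarrow P_{n_i}$ ($1\le i\le k$) and $P_{o_j},\Gamma\Rightarrow\Delta$ ($1\le j\le l$) / $d,\Gamma\Rightarrow\Delta$; $(\mathrm{impdec}R)$ $P_{n_1},\dots,P_{n_k},\Gamma\Rightarrow P_{o_1},\dots,P_{o_l}$ / $\Gamma\Rightarrow\Delta,d$. For an Euler–Venn $d$: $(\mathrm{det}L)$ $d,\Gamma\Rightarrow E(d)$ and $V(d),\Gamma\Rightarrow\Delta$ / $d,\Gamma\Rightarrow\Delta$; $(\mathrm{det}R)$ $E(d),\Gamma\Rightarrow V(d)$ / $\Gamma\Rightarrow\Delta,d$. A proof of a sequent is a finite tree of rule instances with that sequent at the root and all leaves instances of zero-premiss rules; a sequent is provable if it has a proof. *)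

(* Defs.v *)
From HB Require Import structures.
From mathcomp Require Import all_boot all_order.
From mathcomp Require Import finmap.
From Stdlib Require Import List Permutation.

Set Implicit Arguments.
Unset Strict Implicit.
Unset Printing Implicit Defensive.

Import Order.TTheory.
Local Open Scope fset_scope.

(* propositional variables / contours: the countably infinite set nat *)
Definition var := nat.

Definition zone := ({fset var} * {fset var})%type.
Definition zin (z : zone) : {fset var} := z.1.
Definition zout (z : zone) : {fset var} := z.2.

Definition is_zone (L : {fset var}) (z : zone) : bool :=
  fdisjoint (zin z) (zout z) && (zin z `|` zout z == L).

Definition zones (L : {fset var}) : {fset zone} :=
  [fset ((A, L `\` A) : zone) | A in fpowerset L].

Inductive unitary : Type :=
  | Venn of {fset var} & {fset zone}                  (* (L, Z(L), S) *)
  | Euler of {fset var} & {fset zone}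
  | EulerVenn of {fset var} & {fset zone} & {fset zone}.

Inductive diagram : Type :=
  | DU of unitary
  | DAnd of diagram & diagram
  | DOr of diagram & diagram
  | DImp of diagram & diagram.

Definition wf_unitary (d : unitary) : bool :=
  match d with
  | Venn L Sh => Sh `<=` zones L
  | Euler L Z => Z `<=` zones L
  | EulerVenn L Z Sh => (Z `<=` zones L) && (Sh `<=` Z)
  end.

Fixpoint wf_diagram (D : diagram) : bool :=
  match D with
  | DU d => wf_unitary d
  | DAnd D1 D2 | DOr D1 D2 | DImp D1 D2 => wf_diagram D1 && wf_diagram D2
  end.

Definition zone0 : zone := (fset0, fset0).
Definition VBot : diagram := DU (Venn fset0 fset0).
Definition VTop : diagram := DU (Venn fset0 [fset zone0]).
Definition PosL (c : var) : diagram :=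
  DU (Venn [fset c] [fset (([fset c], fset0) : zone)]).
Definition NegL (c : var) : diagram :=
  DU (Venn [fset c] [fset ((fset0, [fset c]) : zone)]).

Definition missing (L : {fset var}) (Z : {fset zone}) : {fset zone} :=
  zones L `\` Z.

Definition adj (z : zone) (c : var) : zone :=
  if c \in zin z then (zin z `\ c, c |` zout z) else (c |` zin z, zout z `\ c).

Definition zred (z : zone) (c : var) : zone := (zin z `\ c, zout z `\ c).
Definition red_L (L : {fset var}) (c : var) : {fset var} := L `\ c.
Definition red_Z (Z : {fset zone}) (c : var) : {fset zone} :=
  [fset zred z c | z in Z].

Definition red_cond (L : {fset var}) (Z : {fset zone}) : Prop :=
  forall z, z \in missing L Z ->
    exists2 l, l \in L & adj z l \in missing L Z.

Definition red_contours (L : {fset var}) (Z : {fset zone}) : {fset var} :=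
  [fset c in L | missing (red_L L c) (red_Z Z c) != fset0].

Definition EulerRed (L : {fset var}) (Z : {fset zone}) (c : var) : diagram :=
  DU (Euler (red_L L c) (red_Z Z c)).

(* The calculus C.  Sequents are pairs of finite multisets, represented
   as lists taken up to permutation (rule [prov_perm]).               *)

Inductive prov : list diagram -> list diagram -> Prop :=
  | prov_perm G D G' D' :
      Permutation G G' -> Permutation D D' -> prov G D -> prov G' D'
  | prov_ax c G D : prov (PosL c :: G) (PosL c :: D)
  | prov_botL G D : prov (VBot :: G) D
  | prov_topR G D : prov G (VTop :: D)
  | prov_andL A B G D : prov (A :: B :: G) D -> prov (DAnd A B :: G) D
  | prov_orL A B G D :
      prov (A :: G) D -> prov (B :: G) D -> prov (DOr A B :: G) D
  | prov_impL A B G D :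
      prov (DImp A B :: G) [:: A] -> prov (B :: G) D -> prov (DImp A B :: G) D
  | prov_andR A B G D :
      prov G (A :: D) -> prov G (B :: D) -> prov G (DAnd A B :: D)
  | prov_orR A B G D : prov G (A :: B :: D) -> prov G (DOr A B :: D)
  | prov_impR A B G D : prov (A :: G) [:: B] -> prov G (DImp A B :: D)
  | prov_litL c G D : prov (NegL c :: G) [:: PosL c] -> prov (NegL c :: G) D
  | prov_litR c G D : prov (PosL c :: G) [::] -> prov G (NegL c :: D)
  | prov_sepL L Sh Sh1 Sh2 G D :
      (1 < #|` Sh|)%N -> Sh1 `|` Sh2 = Sh ->
      prov (DU (Venn L Sh1) :: G) D -> prov (DU (Venn L Sh2) :: G) D ->
      prov (DU (Venn L Sh) :: G) D
  | prov_sepR L Sh Sh1 Sh2 G D :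
      (1 < #|` Sh|)%N -> Sh1 `|` Sh2 = Sh ->
      prov G (DU (Venn L Sh1) :: DU (Venn L Sh2) :: D) ->
      prov G (DU (Venn L Sh) :: D)
  | prov_decL L z G D :
      prov ([seq PosL n | n <- zin z] ++ [seq NegL o | o <- zout z] ++ G) D ->
      prov (DU (Venn L [fset z]) :: G) D
  | prov_decR L z G D :
      (forall n, n \in zin z -> prov G (PosL n :: D)) ->
      (forall o, o \in zout z -> prov G (NegL o :: D)) ->
      prov G (DU (Venn L [fset z]) :: D)
  | prov_redL L Z G D :
      red_cond L Z ->
      prov ([seq EulerRed L Z c | c <- red_contours L Z] ++ G) D ->
      prov (DU (Euler L Z) :: G) D
  | prov_redR L Z G D :
      red_cond L Z ->
      (forall c, c \in red_contours L Z -> prov G (EulerRed L Z c :: D)) ->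
      prov G (DU (Euler L Z) :: D)
  | prov_mzsepL L Z Z1 Z2 G D :
      (1 < #|` missing L Z|)%N ->
      Z1 `<=` zones L -> Z2 `<=` zones L -> Z1 `&` Z2 = Z ->
      prov (DU (Euler L Z1) :: DU (Euler L Z2) :: G) D ->
      prov (DU (Euler L Z) :: G) D
  | prov_mzsepR L Z Z1 Z2 G D :
      (1 < #|` missing L Z|)%N ->
      Z1 `<=` zones L -> Z2 `<=` zones L -> Z1 `&` Z2 = Z ->
      prov G (DU (Euler L Z1) :: D) -> prov G (DU (Euler L Z2) :: D) ->
      prov G (DU (Euler L Z) :: D)
  | prov_impdecL L Z z G D :
      missing L Z = [fset z] ->
      (forall n, n \in zin z -> prov (DU (Euler L Z) :: G) [:: PosL n]) ->
      (forall o, o \in zout z -> prov (PosL o :: G) D) ->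
      prov (DU (Euler L Z) :: G) D
  | prov_impdecR L Z z G D :
      missing L Z = [fset z] ->
      prov ([seq PosL n | n <- zin z] ++ G) [seq PosL o | o <- zout z] ->
      prov G (DU (Euler L Z) :: D)
  | prov_detL L Z Sh G D :
      prov (DU (EulerVenn L Z Sh) :: G) [:: DU (Euler L Z)] ->
      prov (DU (Venn L Sh) :: G) D ->
      prov (DU (EulerVenn L Z Sh) :: G) D
  | prov_detR L Z Sh G D :
      prov (DU (Euler L Z) :: G) [:: DU (Venn L Sh)] ->
      prov G (DU (EulerVenn L Z Sh) :: D).

Local Open Scope order_scope.

Definition heyting_imp {disp : Order.disp_t} {H : tbDistrLatticeType disp}
  (imp : H -> H -> H) : Prop :=
  forall a b c : H, (c `&` a <= b) = (c <= imp a b).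

Section Semantics.
Context {disp : Order.disp_t} {H : tbDistrLatticeType disp}.
Variables (imp : H -> H -> H) (v : var -> H).

Definition hneg (a : H) : H := imp a \bot.

Definition zone_val (z : zone) : H :=
  (\meet_(c <- zin z) v c) `&` (\meet_(c <- zout z) hneg (v c)).

Definition zone_imp (z : zone) : H :=
  imp (\meet_(c <- zin z) v c) (\join_(c <- zout z) v c).

Definition sem_venn (L : {fset var}) (Sh : {fset zone}) : H :=
  \join_(z <- Sh) zone_val z.

Definition sem_euler (L : {fset var}) (Z : {fset zone}) : H :=
  \meet_(z <- missing L Z) zone_imp z.

Definition sem_unitary (d : unitary) : H :=
  match d with
  | Venn L Sh => sem_venn L Sh
  | Euler L Z => sem_euler L Z
  | EulerVenn L Z Sh => imp (sem_euler L Z) (sem_venn L Sh)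
  end.

Fixpoint sem (D : diagram) : H :=
  match D with
  | DU d => sem_unitary d
  | DAnd D1 D2 => sem D1 `&` sem D2
  | DOr D1 D2 => sem D1 `|` sem D2
  | DImp D1 D2 => imp (sem D1) (sem D2)
  end.

End Semantics.

Definition valid (G D : list diagram) : Prop :=
  forall (disp : Order.disp_t) (H : tbDistrLatticeType disp)
         (imp : H -> H -> H), heyting_imp imp ->
  forall v : var -> H,
    \meet_(A <- G) sem imp v A <= \join_(B <- D) sem imp v B.

(* Main.v *)
Require Import Defs.
From HB Require Import structures.
From mathcomp Require Import all_boot all_order.
From mathcomp Require Import finmap.
From Stdlib Require Import List Permutation.
Set Implicit Arguments.
Unset Strict Implicit.
Unset Printing Implicit Defensive.
Import Order.TTheory.
Local Open Scope fset_scope.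

Definition oku (d : unitary) : bool :=
  match d with Venn _ _ => true | Euler L Z => Z `<=` zones L
  | EulerVenn L Z _ => Z `<=` zones L end.
Fixpoint okd D := match D with DU d => oku d
  | DAnd A B | DOr A B | DImp A B => okd A && okd B end.

Lemma wf_ok D : wf_diagram D -> okd D.
Proof.
elim: D => [[L Z|L Z|L Z S]|A IA B IB|A IA B IB|A IA B IB] //=;
  try by move/andP=> [/IA -> /IB ->].
by case/andP.
Qed.

Lemma Forall_all G : Forall (fun A => wf_diagram A) G -> all okd G.
Proof. by elim => //= x l /wf_ok -> _ ->. Qed.

Lemma perm_big_gen R (op : R -> R -> R) idx (F : diagram -> R) s t :
  left_commutative op -> Permutation s t ->
  \big[op/idx]_(x <- s) F x = \big[op/idx]_(x <- t) F x.
Proof.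
move=> lc; elim => [|x s1 t1 _ IH|x y l|s1 t1 u _ IH1 _ IH2].
- by [].
- by rewrite !big_cons IH.
- by rewrite !big_cons lc.
- by rewrite IH1 IH2.
Qed.

Lemma perm_all (p : pred diagram) s t : Permutation s t -> all p s = all p t.
Proof.
elim => [|x s1 t1 _ IH|x y l|s1 t1 u _ IH1 _ IH2] //=.
- by rewrite IH.
- by rewrite andbCA.
- by rewrite IH1 IH2.
Qed.

Lemma in_zones L (z : zone) : (z \in zones L) = (z.1 `<=` L) && (z.2 == L `\` z.1).
Proof.
apply/imfsetP/andP => [[A /= HA ->]|[H1 /eqP H2]] /=.
  by rewrite fpowersetE in HA; split.
by exists z.1; rewrite /= ?fpowersetE // -H2; case: z {H1 H2}.
Qed.


Lemma zone_ext L (y z : zone) : y \in zones L -> z \in zones L -> y.1 = z.1 -> y = z.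
Proof.
rewrite !in_zones => /andP[_ /eqP Hy] /andP[_ /eqP Hz] E.
by case: y z Hy Hz E => [a b] [c d] /= -> -> ->.
Qed.

Lemma red_ok L Z c : Z `<=` zones L -> red_Z Z c `<=` zones (red_L L c).
Proof.
move/fsubsetP=> sZ; apply/fsubsetP => w /imfsetP [z /= zZ ->].
move: (sZ z zZ); rewrite !in_zones /zred /red_L /zin /zout /= => /andP[s1 /eqP e2].
apply/andP; split.
- apply/fsubsetP => x; rewrite !inE => /andP[-> /(fsubsetP s1) ->] //.
- apply/eqP/fsetP => x; rewrite e2 !inE.
  by case: (x == c); case: (x \in z.1); case: (x \in L).
Qed.

Lemma red_L_missing L Z c (w : zone) : c \in L ->
  w \in missing (red_L L c) (red_Z Z c) ->
  ((c |` w.1, w.2) : zone) \in missing L Z /\ ((w.1, c |` w.2) : zone) \in missing L Z.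
Proof.
case: w => w1 w2.
rewrite /missing /red_L !in_fsetD in_zones /= => cL /andP[wnZ /andP[s1 /eqP e2]].
have cw1 : c \notin w1 by apply/negP => /(fsubsetP s1); rewrite !inE eqxx.
have cw2 : c \notin w2 by rewrite e2 !inE eqxx /= andbF.
have hz : forall z : zone, zred z c = (w1, w2) -> z \notin Z.
  move=> z E; apply/negP => zZ; move/negP: wnZ; apply; rewrite -E.
  by apply/imfsetP; exists z.
split; apply/andP; split.
- apply: hz; rewrite /zred /zin /zout /=; congr pair; apply/fsetP => x; rewrite !inE;
  by case: (eqVneq x c) => [->|_] //=; rewrite ?(negPf cw1) ?(negPf cw2).
- rewrite in_zones /=; apply/andP; split.
  + apply/fsubsetP => x; rewrite !inE => /orP[/eqP->//|/(fsubsetP s1)].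
    by rewrite !inE => /andP[].
  + apply/eqP/fsetP => x; rewrite e2 !inE.
    by case: (x == c); case: (x \in w1); case: (x \in L).
- apply: hz; rewrite /zred /zin /zout /=; congr pair; apply/fsetP => x; rewrite !inE;
  by case: (eqVneq x c) => [->|_] //=; rewrite ?(negPf cw1) ?(negPf cw2).
- rewrite in_zones /=; apply/andP; split.
  + apply/fsubsetP => x /(fsubsetP s1); by rewrite !inE => /andP[].
  + apply/eqP/fsetP => x; rewrite e2 !inE.
    case: (eqVneq x c) => [->|_] /=; first by rewrite cL (negPf cw1).
    by case: (x \in w1); case: (x \in L).
Qed.

Lemma red_R_missing L Z (z : zone) l : Z `<=` zones L -> z \in missing L Z -> l \in L ->
  adj z l \in missing L Z -> zred z l \in missing (red_L L l) (red_Z Z l).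
Proof.
move=> sZ; rewrite /missing !in_fsetD => /andP[znZ zL] lL /andP[anZ aL].
apply/andP; split.
- apply/negP => /imfsetP [y /= yZ E].
  have yL := fsubsetP sZ y yZ.
  have E1 : forall x, x != l -> (x \in y.1) = (x \in z.1).
    move=> x xl; move: E => /(congr1 fst) /fsetP /(_ x).
    by rewrite /zred /zin /zout /= !inE xl.
  have [yz|yz] : y.1 = z.1 \/ y.1 = (adj z l).1.
    rewrite /adj /zin /zout.
    case lz: (l \in z.1); case ly: (l \in y.1); [left|right|right|left];
    apply/fsetP => x; rewrite /= ?inE;
    (case: (eqVneq x l) => [->|xl]; [by rewrite ?lz ?ly ?eqxx |
       by rewrite ?(negPf xl) ?E1]).
  + by move: znZ; rewrite -(zone_ext yL zL yz) yZ.
  + by move: anZ; rewrite -(zone_ext yL aL yz) yZ.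
- move: zL; rewrite !in_zones /zred /red_L /zin /zout /= => /andP[s1 /eqP e2].
  apply/andP; split.
  + apply/fsubsetP => x; rewrite !inE => /andP[-> /(fsubsetP s1) ->] //.
  + apply/eqP/fsetP => x; rewrite e2 !inE.
    by case: (x == l); case: (x \in z.1); case: (x \in L).
Qed.

Section Sound.
Local Open Scope order_scope.
Context {disp : Order.disp_t} {H : tbDistrLatticeType disp}
  (imp : H -> H -> H) (hI : heyting_imp imp) (v : var -> H).

Lemma impP a b c : (c `&` a <= b) = (c <= imp a b).
Proof. exact: hI. Qed.

Lemma mp a b : a `&` imp a b <= b.
Proof. by rewrite meetC impP. Qed.

Lemma imp_mono a a' b b' : a' <= a -> b <= b' -> imp a b <= imp a' b'.
Proof.
move=> ha hb; rewrite -impP (le_trans _ hb) //.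
by rewrite (le_trans _ (mp a b)) // meetC leI2.
Qed.

Lemma meet_sub (T : eqType) (A B : list T) (F : T -> H) :
  {subset A <= B} -> \meet_(x <- B) F x <= \meet_(x <- A) F x.
Proof. by move=> sAB; apply/meetsP_seq => x /sAB xB _; exact: meets_inf_seq. Qed.

Lemma join_sub (T : eqType) (A B : list T) (F : T -> H) :
  {subset A <= B} -> \join_(x <- A) F x <= \join_(x <- B) F x.
Proof. by move=> sAB; apply/joinsP_seq => x /sAB xB _; exact: joins_sup_seq. Qed.

Lemma meet_joinr T (s : list T) (F : T -> H) d :
  \meet_(x <- s) (F x `|` d) <= (\meet_(x <- s) F x) `|` d.
Proof.
elim: s => [|a s IH]; first by rewrite !big_nil lexUl.
rewrite !big_cons joinIl; exact: leI2.
Qed.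


Local Notation S := (sem imp v).

Lemma sem_pos c : S (PosL c) = v c.
Proof.
by rewrite /= /sem_venn big_seq_fset1 /zone_val /zin /zout /= big_seq_fset1 big_seq_fset0 meetx1.
Qed.

Lemma sem_neg c : S (NegL c) = hneg imp (v c).
Proof.
by rewrite /= /sem_venn big_seq_fset1 /zone_val /zin /zout /= big_seq_fset1 big_seq_fset0 meet1x.
Qed.

Lemma sem_bot : S VBot = \bot.
Proof. by rewrite /= /sem_venn big_seq_fset0. Qed.

Lemma sem_top : S VTop = \top.
Proof.
by rewrite /= /sem_venn big_seq_fset1 /zone_val /zone0 /zin /zout /= !big_seq_fset0 meetxx.
Qed.

Lemma hey a b x : imp (a `&` x) b `&` imp a (x `|` b) <= imp a b.
Proof.
rewrite -impP; set s := _ `&` a.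
have s1 : s <= x `|` b.
  apply: le_trans (mp a (x `|` b)); rewrite lexI leIr /=.
  by apply: leIxl; exact: leIr.
have s2 : s `&` x <= b.
  apply: le_trans (mp (a `&` x) b); rewrite lexI; apply/andP; split.
    by apply: leI2 => //; exact: leIr.
  by apply: leIxl; apply: leIxl; exact: leIl.
by rewrite -(meet_idPl s1) meetUr leUx s2 leIr.
Qed.

Lemma redL_le L Z c : c \in L ->
  sem_euler imp v L Z <= sem_euler imp v (red_L L c) (red_Z Z c).
Proof.
move=> cL; apply/meetsP_seq => w wm _.
have [m1 m2] := red_L_missing cL wm.
set e := sem_euler imp v L Z.
have h1 : e <= zone_imp imp v ((c |` w.1, w.2)) by exact: meets_inf_seq.
have h2 : e <= zone_imp imp v ((w.1, c |` w.2)) by exact: meets_inf_seq.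
move: h1 h2; rewrite /zone_imp /zin /zout /= => h1 h2.
apply: le_trans (hey _ _ (v c)); rewrite lexI; apply/andP; split.
- apply: (le_trans h1); apply: imp_mono => //.
  apply/meetsP_seq => x; rewrite in_fset1U => /orP[/eqP->|xw] _; first exact: leIr.
  by apply: leIxl; exact: meets_inf_seq.
- apply: (le_trans h2); apply: imp_mono => //.
  apply/joinsP_seq => x; rewrite in_fset1U => /orP[/eqP->|xw] _; first exact: leUl.
  by apply: lexUr; exact: joins_sup_seq.
Qed.

Lemma redR_le L Z : red_cond L Z -> Z `<=` zones L ->
  \meet_(c <- red_contours L Z) sem_euler imp v (red_L L c) (red_Z Z c)
  <= sem_euler imp v L Z.
Proof.
move=> rc sZ; apply/meetsP_seq => z zm _.
have [l lL am] := rc z zm.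
have zr := red_R_missing sZ zm lL am.
have lK : l \in red_contours L Z.
  rewrite /red_contours !inE lL /=; apply/eqP => E; by rewrite E in_fset0 in zr.
have h1 : \meet_(c <- red_contours L Z) sem_euler imp v (red_L L c) (red_Z Z c)
   <= sem_euler imp v (red_L L l) (red_Z Z l) by exact: meets_inf_seq.
have h2 : sem_euler imp v (red_L L l) (red_Z Z l) <= zone_imp imp v (zred z l)
   by exact: meets_inf_seq.
apply: le_trans h1 (le_trans h2 _).
rewrite /zone_imp /zred /zin /zout /=; apply: imp_mono;
  [apply: meet_sub | apply: join_sub] => x; by rewrite in_fsetD1 => /andP[].
Qed.


Lemma permM G G' : Permutation G G' -> \meet_(A <- G) S A = \meet_(A <- G') S A.
Proof. by move=> p; apply: perm_big_gen p; exact: meetCA. Qed.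

Lemma permJ G G' : Permutation G G' -> \join_(A <- G) S A = \join_(A <- G') S A.
Proof. by move=> p; apply: perm_big_gen p; exact: joinCA. Qed.

Lemma meet_pos s : \meet_(A <- [seq PosL n | n <- s]) S A = \meet_(n <- s) v n.
Proof. by elim: s => [|a s IH]; rewrite ?big_nil // !big_cons sem_pos IH. Qed.

Lemma join_pos s : \join_(A <- [seq PosL n | n <- s]) S A = \join_(n <- s) v n.
Proof. by elim: s => [|a s IH]; rewrite ?big_nil // !big_cons sem_pos IH. Qed.

Lemma meet_neg s : \meet_(A <- [seq NegL n | n <- s]) S A = \meet_(n <- s) hneg imp (v n).
Proof. by elim: s => [|a s IH]; rewrite ?big_nil // !big_cons sem_neg IH. Qed.

Lemma venn_U (Sh1 Sh2 : {fset zone}) (F : zone -> H) :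
  \join_(z <- (Sh1 `|` Sh2)%fset) F z <= \join_(z <- Sh1) F z `|` \join_(z <- Sh2) F z.
Proof.
apply/joinsP_seq => x; rewrite in_fsetU => /orP[h|h] _;
  [apply: lexUl | apply: lexUr]; exact: joins_sup_seq.
Qed.

Lemma all_okd_pos s G : all okd ([seq PosL n | n <- s] ++ G) = all okd G.
Proof. by elim: s. Qed.

Lemma all_okd_pos0 (s : seq.seq var) : all okd [seq PosL n | n <- s].
Proof. by elim: s. Qed.

Lemma all_okd_lits s t G :
  all okd ([seq PosL n | n <- s] ++ [seq NegL o | o <- t] ++ G) = all okd G.
Proof. by elim: s => [|a s IH] //=; elim: t. Qed.

Lemma sound G D : prov G D -> all okd G -> all okd D ->
  \meet_(A <- G) S A <= \join_(B <- D) S B.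
Proof.
elim => {G D}.
-
  move=> G D G' D' pG pD _ IH okG okD.
  rewrite -(permM pG) -(permJ pD).
  by apply: IH; [rewrite (perm_all _ pG) | rewrite (perm_all _ pD)].
-
  move=> c G D _ _; rewrite !big_cons sem_pos; apply: leIxl; exact: leUl.
-
  move=> G D _ _; rewrite big_cons sem_bot; apply: leIxl; exact: le0x.
-
  move=> G D _ _; rewrite big_cons sem_top; apply: lexUl; exact: lex1.
-
  move=> A B G D _ IH /= /andP[/andP[oA oB] oG] oD.
  move: (IH); rewrite /= oA oB oG => /(_ isT oD).
  by rewrite !big_cons /= meetA.
-
  move=> A B G D _ IH1 _ IH2 /= /andP[/andP[oA oB] oG] oD.
  move: (IH1) (IH2); rewrite /= oA oB oG => /(_ isT oD) h1 /(_ isT oD) h2.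
  move: h1 h2; rewrite !big_cons /= => h1 h2.
  by rewrite meetUl leUx h1 h2.
-
  move=> A B G D _ IH1 _ IH2 /= /andP[/andP[oA oB] oG] oD.
  move: (IH1) (IH2); rewrite /= oA oB oG => /(_ isT isT) h1 /(_ isT oD) h2.
  move: h1 h2; rewrite !big_cons big_nil joinx0 /= => h1 h2.
  apply: le_trans h2; rewrite lexI leIr andbT.
  apply: le_trans (mp (S A) (S B)); by rewrite lexI h1 leIl.
-
  move=> A B G D _ IH1 _ IH2 oG /= /andP[/andP[oA oB] oD].
  move: (IH1) (IH2); rewrite /= oA oB oD => /(_ oG isT) h1 /(_ oG isT) h2.
  move: h1 h2; rewrite !big_cons /= => h1 h2.
  by rewrite joinIl lexI h1 h2.
-
  move=> A B G D _ IH oG /= /andP[/andP[oA oB] oD].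
  move: (IH); rewrite /= oA oB oD => /(_ oG isT).
  by rewrite !big_cons /= joinA.
-
  move=> A B G D _ IH oG /= /andP[/andP[oA oB] oD].
  move: (IH); rewrite /= oA oB oG => /(_ isT isT).
  rewrite !big_cons big_nil joinx0 /= => h.
  by apply: lexUl; rewrite -impP meetC.
-
  move=> c G D _ IH oG oD.
  have := IH oG isT; rewrite !big_cons big_nil joinx0 sem_neg sem_pos => h.
  apply: (le_trans _ (le0x _)); rewrite /hneg in h *.
  apply: le_trans (mp (v c) \bot); by rewrite lexI h leIl.
-
  move=> c G D _ IH oG oD.
  have := IH oG isT; rewrite !big_cons big_nil sem_pos => h.
  by rewrite sem_neg; apply: lexUl; rewrite /hneg -impP meetC.
-
  move=> L Sh Sh1 Sh2 G D _ E _ IH1 _ IH2 oG oD.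
  have := IH1 oG oD; have := IH2 oG oD; rewrite !big_cons /= => h2 h1.
  rewrite /sem_venn -E in h1 h2 *; apply: le_trans (leI2 (venn_U Sh1 Sh2 _) (lexx _)) _.
  by rewrite meetUl leUx h1 h2.
-
  move=> L Sh Sh1 Sh2 G D _ E _ IH oG oD.
  have := IH oG oD; rewrite !big_cons /= joinA => h.
  apply: le_trans h _; apply: leU2 => //; rewrite /sem_venn -E leUx.
  by apply/andP; split; apply: join_sub => x xS; rewrite in_fsetU xS ?orbT.
-
  move=> L z G D _ IH oG oD.
  have := IH _ oD; rewrite all_okd_lits => /(_ oG).
  rewrite !big_cat meet_pos meet_neg big_cons /= /sem_venn big_seq_fset1 /zone_val.
  by rewrite meetA.
-
  move=> L z G D _ IH1 _ IH2 oG oD.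
  rewrite big_cons /= /sem_venn big_seq_fset1 /zone_val joinIl lexI.
  apply/andP; split; apply: le_trans (meet_joinr _ _ _);
    apply/meetsP_seq => x xin _.
  + by have := IH1 x xin oG oD; rewrite big_cons sem_pos.
  + by have := IH2 x xin oG oD; rewrite big_cons sem_neg.
-
  move=> L Z G D rc _ IH /= /andP[oE oG] oD.
  have o1 : all okd ([seq EulerRed L Z c | c <- red_contours L Z] ++ G).
    rewrite all_cat oG andbT all_map; apply/allP => c _ /=; exact: red_ok.
  have := IH o1 oD; rewrite big_cat big_map => h.
  apply: le_trans h; rewrite big_cons; apply: leI2 => //.
  apply/meetsP_seq => c cK _; apply: redL_le.
  have cK' : c \in red_contours L Z := cK.
  by move: cK'; rewrite /red_contours !inE => /andP[].
-
  move=> L Z G D rc _ IH oG /= /andP[oE oD].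
  rewrite big_cons.
  apply: le_trans (leU2 (redR_le rc oE) (lexx _)).
  apply: le_trans (meet_joinr _ _ _).
  apply/meetsP_seq => c cK _.
  have o1 : all okd (EulerRed L Z c :: D) by rewrite /= oD andbT; exact: red_ok.
  by have := IH c cK oG o1; rewrite big_cons.
-
  move=> L Z Z1 Z2 G D _ s1 s2 E _ IH /= /andP[_ oG] oD.
  have := IH _ oD; rewrite /= s1 s2 oG => /(_ isT).
  rewrite !big_cons /= meetA => h; apply: le_trans h; apply: leI2 => //.
  rewrite lexI; apply/andP; split; apply: meet_sub => x;
    rewrite /missing !in_fsetD -E in_fsetI => /andP[/negPf h ->];
    by rewrite h ?andbF.
-
  move=> L Z Z1 Z2 G D _ s1 s2 E _ IH1 _ IH2 oG /= /andP[_ oD].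
  have := IH1 oG; have := IH2 oG; rewrite /= s1 s2 oD => /(_ isT) h2 /(_ isT) h1.
  move: h1 h2; rewrite !big_cons /= => h1 h2.
  have X : sem_euler imp v L Z1 `&` sem_euler imp v L Z2 <= sem_euler imp v L Z.
    apply/meetsP_seq => x; rewrite /missing in_fsetD -E in_fsetI negb_and.
    move=> /andP[/orP[h|h] xz] _; [apply: leIxl | apply: leIxr];
      by apply: meets_inf_seq; rewrite // in_fsetD h xz.
  apply: le_trans (leU2 X (lexx _)).
  by rewrite joinIl lexI h1 h2.
-
  move=> L Z z G D mz _ IH1 _ IH2 oG oD.
  have se : S (DU (Euler L Z)) = zone_imp imp v z.
    by rewrite /= /sem_euler mz big_seq_fset1.
  have oG' : all okd G by move: oG => /= /andP[].
  rewrite big_cons se.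
  have ha : zone_imp imp v z `&` \meet_(A <- G) S A <= \meet_(n <- zin z) v n.
    apply/meetsP_seq => n nin _.
    by have := IH1 n nin oG isT; rewrite !big_cons big_nil sem_pos joinx0 se.
  have hb : zone_imp imp v z `&` \meet_(A <- G) S A <= \join_(o <- zout z) v o.
    apply: le_trans (mp (\meet_(n <- zin z) v n) _); rewrite lexI ha /=; exact: leIl.
  have : \join_(o <- zout z) v o <= imp (\meet_(A <- G) S A) (\join_(B <- D) S B).
    apply/joinsP_seq => o oin _; rewrite -impP.
    by have := IH2 o oin oG' oD; rewrite big_cons sem_pos.
  rewrite -impP => hbd; apply: le_trans hbd.
  by rewrite lexI hb leIr.
-
  move=> L Z z G D mz _ IH oG oD.
  have se : S (DU (Euler L Z)) = zone_imp imp v z.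
    by rewrite /= /sem_euler mz big_seq_fset1.
  have := IH _ _; rewrite all_okd_pos => /(_ oG).
  move=> /(_ (all_okd_pos0 _)); rewrite big_cat meet_pos join_pos => h.
  by rewrite big_cons se; apply: lexUl; rewrite /zone_imp -impP meetC.
-
  move=> L Z Sh G D _ IH1 _ IH2 oG oD.
  have [oE oG'] : (Z `<=` zones L)%fset /\ all okd G by move: oG => /= /andP[].
  have := IH1 oG; rewrite /= oE => /(_ isT); have := IH2 oG' oD.
  rewrite !big_cons big_nil joinx0 /= => h2 h1.
  apply: le_trans h2; rewrite lexI leIr andbT.
  apply: le_trans (mp (sem_euler imp v L Z) _); by rewrite lexI h1 leIl.
-
  move=> L Z Sh G D _ IH oG /= /andP[oE oD].
  have := IH _ isT; rewrite /= oE oG => /(_ isT).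
  rewrite !big_cons big_nil joinx0 /= => h.
  by apply: lexUl; rewrite -impP meetC.
Qed.

End Sound.

Theorem theorem1 (G D : list diagram) :
  Forall (fun A => wf_diagram A) G -> Forall (fun B => wf_diagram B) D ->
  prov G D -> valid G D.
Proof.
move=> wG wD p disp H imp hI v.
exact: (sound hI v p (Forall_all wG) (Forall_all wD)).
Qed.
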